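(* Let $(X,d)$ be a metric space, $\emptyset\neq F\subseteq X$, and let $G,H:\mathbb{R}_+\to\mathbb{R}_+$ satisfy property (G) and property (H). Let $(x_n)$ be a sequence in $X$ which is $(G,H)$-Fej\'er monotone w.r.t. $F$. (i) If $\{x_n\mid n\in\mathbb{N}\}$ has an adherent point (a point of its closure) $\hat x\in F$, then $(x_n)$ converges to $\hat x$. (ii) If moreover $H$ has the property that for every sequence $(a_n)$ in $\mathbb{R}_+$ with $(H(a_n))$ bounded, $(a_n)$ is bounded, then $(x_n)$ is bounded.
   Context: $\mathbb{R}_+$ denotes the nonnegative reals. Property (G): for every sequence $(a_n)$ in $\mathbb{R}_+$, $a_n\to 0$ implies $G(a_n)\to0$. Property (H): for every sequence $(a_n)$ in $\mathbb{R}_+$, $H(a_n)\to0$ implies $a_n\to0$. $(x_n)$ is $(G,H)$-Fej\'er monotone w.r.t. $F$ if $H(d(x_{n+m},p))\le G(d(x_n,p))$ for all $n,m\in\mathbb{N}$ and all $p\in F$. *)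

(* Defs.v *)
From Stdlib Require Import Reals Lra.
Open Scope R_scope.

Definition is_metric {X : Type} (d : X -> X -> R) : Prop :=
  (forall x y, 0 <= d x y) /\
  (forall x y, d x y = 0 <-> x = y) /\
  (forall x y, d x y = d y x) /\
  (forall x y z, d x z <= d x y + d y z).

Definition property_G (G : R -> R) : Prop :=
  forall a : nat -> R, (forall n, 0 <= a n) -> Un_cv a 0 -> Un_cv (fun n => G (a n)) 0.

Definition property_H (H : R -> R) : Prop :=
  forall a : nat -> R, (forall n, 0 <= a n) -> Un_cv (fun n => H (a n)) 0 -> Un_cv a 0.

Definition property_Hbdd (H : R -> R) : Prop :=
  forall a : nat -> R, (forall n, 0 <= a n) ->
    (exists M, forall n, Rabs (H (a n)) <= M) -> (exists M, forall n, Rabs (a n) <= M).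

Definition maps_nonneg (f : R -> R) : Prop := forall t, 0 <= t -> 0 <= f t.

Definition GH_fejer {X : Type} (d : X -> X -> R) (G H : R -> R)
  (F : X -> Prop) (x : nat -> X) : Prop :=
  forall n m p, F p -> H (d (x (n + m)%nat) p) <= G (d (x n) p).

Definition adherent {X : Type} (d : X -> X -> R) (x : nat -> X) (xh : X) : Prop :=
  forall eps, 0 < eps -> exists n, d (x n) xh < eps.

Definition converges_to {X : Type} (d : X -> X -> R) (x : nat -> X) (l : X) : Prop :=
  forall eps, 0 < eps -> exists N, forall n, (N <= n)%nat -> d (x n) l < eps.

Definition bounded_seq {X : Type} (d : X -> X -> R) (x : nat -> X) : Prop :=
  exists (p : X) (M : R), forall n, d (x n) p <= M.

(* Main.v *)
Require Import Defs.
From Stdlib Require Import Reals ZArith Lra Lia Classical ClassicalEpsilon.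
Open Scope R_scope.

Lemma small_cv (a : nat -> R) :
  (forall k, 0 <= a k) -> (forall k, a k < / INR (S k)) -> Un_cv a 0.
Proof.
  intros H0 H1 eps Heps.
  destruct (archimed (/ eps)) as [Hu _].
  assert (Hpos : (0 <= up (/ eps))%Z).
  { apply le_IZR. assert (0 < / eps) by (apply Rinv_0_lt_compat; lra). lra. }
  exists (Z.to_nat (up (/ eps))). intros n Hn.
  unfold R_dist. rewrite Rminus_0_r, Rabs_right by (apply Rle_ge, H0).
  apply Rlt_trans with (/ INR (S n)); [apply H1|].
  rewrite <- (Rinv_inv eps).
  apply Rinv_lt_contravar.
  - apply Rmult_lt_0_compat; [apply Rinv_0_lt_compat; lra| apply lt_0_INR; lia].
  - apply Rlt_le_trans with (IZR (up (/ eps))); [exact Hu|].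
    rewrite <- (Z2Nat.id _ Hpos), <- INR_IZR_INZ.
    rewrite S_INR. apply le_INR in Hn. unfold ge in Hn. lra.
Qed.

Theorem lemma4p2 (X : Type) (d : X -> X -> R) (F : X -> Prop) (G H : R -> R)
  (x : nat -> X) :
  is_metric d ->
  (exists p, F p) ->
  maps_nonneg G -> maps_nonneg H ->
  property_G G -> property_H H ->
  GH_fejer d G H F x ->
  (forall xh, F xh -> adherent d x xh -> converges_to d x xh) /\
  (property_Hbdd H -> bounded_seq d x).
Proof.
  intros [Dnn _] [p Fp] HG HH PG PH Fej. split.
  - intros xh Fxh Adh eps Heps.
    apply NNPP; intro Hnc.
    assert (Hk : forall k : nat, {n : nat | d (x n) xh < / INR (S k)}).
    { intro k. apply constructive_indefinite_description. apply Adh.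
      apply Rinv_0_lt_compat, lt_0_INR; lia. }
    assert (Hm : forall N : nat, {m : nat | (N <= m)%nat /\ eps <= d (x m) xh}).
    { intro N. apply constructive_indefinite_description.
      apply NNPP; intro C. apply Hnc. exists N. intros n Hn.
      apply Rnot_le_lt. intro E. apply C. exists n. auto. }
    set (n := fun k => proj1_sig (Hk k)).
    set (m := fun k => proj1_sig (Hm (n k))).
    assert (Ca : Un_cv (fun k => d (x (n k)) xh) 0).
    { apply small_cv; [intro; apply Dnn|]. intro k. exact (proj2_sig (Hk k)). }
    pose proof (PG _ (fun k => Dnn _ _) Ca) as CG.
    assert (CH : Un_cv (fun k => H (d (x (m k)) xh)) 0).
    { intros e He. destruct (CG e He) as [N HN]. exists N. intros k Hk'.
      specialize (HN k Hk'). unfold R_dist in *. rewrite Rminus_0_r in *.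
      assert (Hle : H (d (x (m k)) xh) <= G (d (x (n k)) xh)).
      { destruct (proj2_sig (Hm (n k))) as [Hle _].
        unfold m. replace (proj1_sig (Hm (n k))) with (n k + (proj1_sig (Hm (n k)) - n k))%nat by lia.
        apply Fej; auto. }
      assert (0 <= H (d (x (m k)) xh)) by (apply HH, Dnn).
      rewrite Rabs_right in * by lra.
      lra. }
    pose proof (PH _ (fun k => Dnn _ _) CH) as Cb.
    destruct (Cb eps Heps) as [N HN]. specialize (HN N (le_n N)).
    unfold R_dist in HN. rewrite Rminus_0_r, Rabs_right in HN by (apply Rle_ge, Dnn).
    destruct (proj2_sig (Hm (n N))) as [_ Hge]. unfold m in HN. lra.
  - intro Hb. destruct (Hb (fun k => d (x k) p) (fun k => Dnn _ _)) as [M HM].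
    + exists (G (d (x 0%nat) p)). intro k.
      rewrite Rabs_right by (apply Rle_ge, HH, Dnn).
      replace k with (0 + k)%nat by lia. apply Fej; auto.
    + exists p, M. intro k. specialize (HM k). rewrite Rabs_right in HM by (apply Rle_ge, Dnn). exact HM.
Qed.
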